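(* Let $m\ge 2$ and $1\le k\le 2^m$ be integers, and let $\mathcal B$ be a nonempty set of $k$-element subsets of $\mathrm{PG}(1,2^m)$ that is invariant under the action of $\mathrm{PGL}_2(\mathrm{GF}(2^m))$ (i.e. $\pi(B)\in\mathcal B$ for all $B\in\mathcal B$ and all $\pi\in \mathrm{PGL}_2(\mathrm{GF}(2^m))$). Let $\mathbb D=(\mathrm{PG}(1,2^m),\mathcal B)$. Then the $2$-rank of $\mathbb D$ is $2^m$ if $k$ is even and $2^m+1$ if $k$ is odd.
   Context: $\mathrm{PGL}_2(\mathrm{GF}(2^m))$ acts on $\mathrm{PG}(1,2^m)=\mathrm{GF}(2^m)\cup\{\infty\}$ by linear fractional transformations. The $2$-rank of an incidence structure $(X,\mathcal B)$ is the rank over $\mathrm{GF}(2)$ of its $|\mathcal B|\times|X|$ $(0,1)$-incidence matrix (entry $1$ iff the point lies in the block). *)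

(* Defs.v *)
From HB Require Import structures.
From mathcomp Require Import all_boot all_order all_algebra all_field.
Set Implicit Arguments. Unset Strict Implicit. Unset Printing Implicit Defensive.
Import GRing.Theory.
Local Open Scope ring_scope.

(* The projective line PG(1,q) = F ∪ {∞}, with None = ∞ and Some x = x. *)
Definition projline (F : finFieldType) := option F.

Definition lft (F : finFieldType) (a b c d : F) (x : option F) : option F :=
  match x with
  | None => if c == 0 then None else Some (a / c)
  | Some y => if c * y + d == 0 then None else Some ((a * y + b) / (c * y + d))
  end.

Definition in_PGL2 (F : finFieldType) (f : option F -> option F) : Prop :=
  exists a b c d : F, a * d - b * c != 0 /\ f =1 lft a b c d.

Definition incidence_mx (T : finType) (B : {set {set T}}) :
    'M['F_2]_(#|B|, #|T|) :=
  \matrix_(i < #|B|, j < #|T|)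
     (if enum_val j \in (enum_val i : {set T}) then 1 else 0).

Definition two_rank (T : finType) (B : {set {set T}}) : nat :=
  \rank (incidence_mx B).

(* Main.v *)
Require Import Defs.
From mathcomp Require Import all_boot all_order all_algebra all_field.
From mathcomp Require Import ring zify.
Set Implicit Arguments. Unset Strict Implicit. Unset Printing Implicit Defensive.
Import GRing.Theory.
Local Open Scope ring_scope.

Lemma F2nat n : (n%:R : 'F_2) = (odd n)%:R.
Proof. by rewrite -(Zp_nat_mod (p:=2)) // modn2. Qed.
Lemma F2add (a : 'F_2) : a + a = 0.
Proof. by rewrite -mulr2n -mulr_natr F2nat mulr0. Qed.

Section S.
Variable F : finFieldType.

Lemma PGL_ext (f g : option F -> option F) : in_PGL2 g -> f =1 g -> in_PGL2 f.
Proof. by move=> [a [b [c [d [h1 h2]]]]] e; exists a, b, c, d; split => // x; rewrite e h2. Qed.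

Definition tr (b : F) : option F -> option F := omap (fun x => x + b).
Lemma trK b : cancel (tr b) (tr (- b)).
Proof. by case=> //= x; rewrite addrK. Qed.
Lemma trNK b : cancel (tr (- b)) (tr b).
Proof. by case=> //= x; rewrite subrK. Qed.
Lemma tr_lft b : tr b =1 lft 1 b 0 1.
Proof. case=> [x|] /=; last by rewrite eqxx. by rewrite mul0r add0r oner_eq0 divr1 mul1r. Qed.
Lemma tr_PGL b : in_PGL2 (tr b).
Proof. exists 1, b, 0, 1; split; last exact: tr_lft. by rewrite mulr1 mulr0 subr0 oner_eq0. Qed.

Definition sig (c : F) := lft c 1 1 0.
Definition siginv (c : F) (z : option F) : option F :=
  match z with None => Some 0 | Some w => if w == c then None else Some (w - c)^-1 end.
Lemma sigK c : cancel (sig c) (siginv c).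
Proof.
case=> [y|]; rewrite /sig /=; last by rewrite oner_eq0 /= divr1 eqxx.
rewrite mul1r addr0; have [->|y0] := eqVneq y 0; first by [].
rewrite /= (_ : (c * y + 1) / y = c + y^-1); last by field.
rewrite -subr_eq0 addrC addKr invr_eq0 (negbTE y0); congr Some.
by rewrite invrK.
Qed.
Lemma siginvK c : cancel (siginv c) (sig c).
Proof.
case=> [w|]; rewrite /sig /=; last by rewrite mul1r addr0 eqxx.
case: eqVneq => [->|wc] /=; first by rewrite oner_eq0 divr1.
rewrite mul1r addr0 invr_eq0 subr_eq0 (negbTE wc); congr Some.
by field; rewrite subr_eq0 wc oner_eq0.
Qed.
Lemma sig_tr c b : (sig c \o tr b) =1 lft c (c * b + 1) 1 b.
Proof.
case=> [y|] //=.
rewrite !mul1r addr0; case: eqVneq => // h; congr Some.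
by congr (_ / _); ring.
Qed.
Lemma sig_PGL c b : in_PGL2 (sig c \o tr b).
Proof.
exists c, (c * b + 1), 1, b; split; last exact: sig_tr.
have -> : c * b - (c * b + 1) * 1 = -1 by ring.
by rewrite oppr_eq0 oner_eq0.
Qed.

Definition mk (a : F) := lft 0 1 1 (- a).
Lemma mk_None a x : (mk a x == None) = (x == Some a).
Proof.
case: x => [y|] /=; last by rewrite oner_eq0.
rewrite mul1r subr_eq0; case: (eqVneq y a) => [->|h]; rewrite ?eqxx //.
by apply/esym/negbTE; apply: contra h => /eqP [->].
Qed.
Lemma mk_PGL a : in_PGL2 (mk a).
Proof.
exists 0, 1, 1, (- a); split => //.
by rewrite mul0r mul1r sub0r oppr_eq0 oner_eq0.
Qed.

Lemma sum_option (g : option F -> 'F_2) :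
  \sum_(x : option F) g x = g None + \sum_(y : F) g (Some y).
Proof.
rewrite (bigD1 None) //=; congr (_ + _).
rewrite (reindex (fun y : F => Some y)) /=; first by apply: eq_bigl.
by exists (odflt 0) => [y _ //|[y|] //=].
Qed.

Lemma sumT (T : finType) (g : T -> 'F_2) :
  \sum_(x : T) g x = \sum_(j < #|T|) g (enum_val j).
Proof. by rewrite (reindex (fun j : 'I_#|T| => enum_val j)) //; apply: onW_bij; apply: enum_val_bij. Qed.

Lemma sum_card (T : finType) (Z : {set T}) :
  \sum_(x : T) (if x \in Z then 1 else 0 : 'F_2) = #|Z|%:R.
Proof. by rewrite -big_mkcond sumr_const. Qed.


Section Count.
Variable Y : {set option F}.
Hypothesis hY : \sum_(y : F) (if Some y \in Y then 1 else 0 : 'F_2) = 1.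
Hypothesis hF2 : (#|F|%:R : 'F_2) = 0.

Lemma count (s si : option F -> option F) (K1 : cancel s si) (K2 : cancel si s) z :
  \sum_(b : F) (if z \in (s \o tr b) @: Y then 1 else 0 : 'F_2)
  = if z != s None then 1 else 0.
Proof.
have e b : (z \in (s \o tr b) @: Y) = (tr (- b) (si z) \in Y).
  have inj : injective (s \o tr b).
    by apply: (can_inj (g := tr (- b) \o si)) => x /=; rewrite K1 trK.
  have ez : (s \o tr b) (tr (- b) (si z)) = z by rewrite /= trNK K2.
  by rewrite -{1}ez mem_imset.
under eq_bigr do rewrite e.
case ez: (si z) => [w|] /=.
- have inj : injective (fun b : F => w - b) by move=> b1 b2 /addrI /oppr_inj.
  rewrite (reindex_inj inj) /=.
  under eq_bigr do rewrite subKr.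
  rewrite hY -[z]K2 ez (inj_eq (can_inj K1)) //.
- rewrite -[z]K2 ez eqxx.
  case: (None \in Y); last by rewrite big1.
  by rewrite sumr_const.
Qed.
End Count.

Definition ind (T : finType) (Z : {set T}) : 'rV['F_2]_#|T| :=
  \row_j (if enum_val j \in Z then 1 else 0).

Lemma ind_row (B : {set {set option F}}) Z (hZ : Z \in B) :
  (ind Z <= incidence_mx B)%MS.
Proof.
rewrite (_ : ind Z = row (enum_rank_in hZ Z) (incidence_mx B)) ?row_sub //.
by apply/rowP => j; rewrite !mxE enum_rankK_in.
Qed.

Lemma compl_sub (B : {set {set option F}}) (Y : {set option F})
  (hY : \sum_(y : F) (if Some y \in Y then 1 else 0 : 'F_2) = 1)
  (hF2 : (#|F|%:R : 'F_2) = 0)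
  (s si : option F -> option F) (K1 : cancel s si) (K2 : cancel si s)
  (hB : forall b, (s \o tr b) @: Y \in B) :
  (ind (~: [set (s None)]) <= incidence_mx B)%MS.
Proof.
rewrite (_ : ind _ = \sum_(b : F) ind ((s \o tr b) @: Y)).
  by apply: summx_sub => b _; apply: ind_row.
apply/rowP => j; rewrite summxE !mxE in_setC in_set1.
under eq_bigr do rewrite mxE.
by rewrite (count hY hF2 K1 K2).
Qed.

End S.

Lemma pair_ind (T : finType) (j j0 : 'I_#|T|) :
  ('e_j + 'e_j0 : 'rV['F_2]_#|T|) =
  ind (~: [set enum_val j]) + ind (~: [set enum_val j0]).
Proof.
apply/rowP => i; rewrite !mxE !in_setC !in_set1 !(inj_eq enum_val_inj) /=.
by case: (i == j); case: (i == j0); rewrite /= ?F2add ?addr0 ?add0r.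
Qed.

Lemma even_sub (T : finType) (p0 : T) r (A : 'M['F_2]_(r, #|T|))
  (hp : forall p : T, (ind (~: [set p]) <= A)%MS)
  (v : 'rV_#|T|) (hv : \sum_j v 0 j = 0) : (v <= A)%MS.
Proof.
set j0 := enum_rank p0.
have -> : v = \sum_j v 0 j *: ('e_j + 'e_j0).
  rewrite (eq_bigr _ (fun j _ => scalerDr _ _ _)) big_split /=.
  by rewrite -scaler_suml hv scale0r addr0 -row_sum_delta.
apply: summx_sub => j _; apply: scalemx_sub.
by rewrite pair_ind; apply: addmx_sub.
Qed.

Lemma sum_row0 n (v : 'rV['F_2]_n) : v *m const_mx 1 = (0 : 'M_(1,1)) -> \sum_j v 0 j = 0.
Proof.
move=> h; transitivity ((v *m (const_mx 1 : 'cV_n)) 0 0); last by rewrite h mxE.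
by rewrite mxE; apply: eq_bigr => j _; rewrite mxE mulr1.
Qed.

Local Close Scope ring_scope.

Theorem theorem12 (F : finFieldType) (m k : nat)
  (hF : #|F| = 2 ^ m) (hm : 2 <= m) (hk1 : 1 <= k) (hk2 : k <= 2 ^ m)
  (B : {set {set option F}})
  (hne : B != set0)
  (hcard : forall X, X \in B -> #|X| = k)
  (hinv : forall (f : option F -> option F), in_PGL2 f ->
            forall X, X \in B -> [set f x | x in X] \in B) :
  two_rank B = (if odd k then (2 ^ m).+1 else 2 ^ m).
Proof.
Local Open Scope ring_scope.
rewrite /two_rank; set A := incidence_mx B.
have hn := card_option F; rewrite hF in hn.
have hF2 : (#|F|%:R : 'F_2) = 0 by rewrite F2nat hF oddX; case: (m) hm.
have [Y hYB hY] : exists2 Y, Y \in B &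
    \sum_(y : F) (if Some y \in Y then 1 else 0 : 'F_2) = 1.
  case/set0Pn: hne => X hX.
  have [x0 hx0] : exists x0, (x0 \in X) = ~~ odd k.
    case ok: (odd k) => /=.
    - case: (pickP [pred x | x \notin X]) => [x0 /= h|hall].
        by exists x0; rewrite (negbTE h).
      have eX : X = setT.
        by apply/setP => x; rewrite inE; move: (hall x) => /= /negbFE.
      have := hcard X hX; rewrite eX cardsT hn => ek.
      by rewrite -ek ltnn in hk2.
    - have : X != set0 by rewrite -card_gt0 (hcard X hX).
      by case/set0Pn => x0 h; exists x0.
  pose f := if x0 is Some a then mk a else tr 0.
  have hf x : (f x == None) = (x == x0).
    rewrite /f; case: (x0) => [a|]; first exact: mk_None.
    by case: x => [y|].
  have hfP : in_PGL2 f by rewrite /f; case: (x0) => [a|]; [exact: mk_PGL | exact: tr_PGL].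
  exists (f @: X); first exact: hinv.
  have hN : (None \in f @: X) = ~~ odd k.
    rewrite -hx0; apply/imsetP/idP => [[x hx /esym/eqP]|h].
      by rewrite hf => /eqP <-.
    by exists x0 => //; apply/esym/eqP; rewrite hf.
  have := sum_card (f @: X); rewrite sum_option hcard ?hinv // hN F2nat.
  case: (odd k) => /=.
  - by rewrite add0r => ->.
  - set S := \sum_(y : F) _ => h.
    by rewrite -[S]add0r -(F2add 1) -addrA h addr0.
have hp p : (ind (~: [set p]) <= A)%MS.
  case: p => [c|].
  - have := compl_sub hY hF2 (sigK c) (siginvK c) (fun b => hinv _ (sig_PGL c b) _ hYB).
    by rewrite /sig /= oner_eq0 /= divr1.
  - have K : cancel (@id (option F)) id by [].
    apply: (compl_sub hY hF2 K K) => b.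
    by apply: (hinv _ _ _ hYB); apply: PGL_ext (tr_PGL b) _.
have hrA : (\rank A <= (2 ^ m).+1)%N by rewrite -hn rank_leq_col.
case ok: (odd k).
- have all_sub (v : 'rV['F_2]_#|{: option F}|) : (v <= A)%MS.
    set s := \sum_j v 0 j.
    have -> : v = (v + s *: ind Y) + s *: ind Y.
      by rewrite -addrA -scalerDl F2add scale0r addr0.
    apply: addmx_sub; last exact: scalemx_sub (ind_row hYB).
    apply: (even_sub None hp).
    under eq_bigr do rewrite !mxE.
    rewrite big_split /= -mulr_sumr -(sumT (fun x => if x \in Y then 1 else 0)).
    by rewrite sum_card (hcard Y hYB) F2nat ok mulr1 F2add.
  have : (1%:M <= A)%MS by apply/row_subP => i; apply: all_sub.
  move/mxrankS; rewrite mxrank1 => h.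
  have e : #|{: option F}| = (2 ^ m).+1 by rewrite card_option hF.
  apply/eqP; rewrite eqn_leq hrA /=; move: h; rewrite [X in (X <= _)%N]e //.
- pose one := (const_mx 1 : 'M['F_2]_(#|{: option F}|, 1)).
  have hA1 : A *m one = 0.
    apply/matrixP => i l; rewrite !mxE.
    under eq_bigr do rewrite !mxE mulr1.
    rewrite -(sumT (fun x => if x \in enum_val i then 1 else 0)).
    by rewrite sum_card (hcard _ (enum_valP i)) F2nat ok.
  have h1 : (one^T <= kermx A^T)%MS.
    by apply/sub_kermxP; rewrite -trmx_mul hA1 trmx0.
  have r1 : \rank one = 1%N.
    apply/eqP; rewrite eqn_leq rank_leq_col lt0n mxrank_eq0 /=.
    apply/eqP => /matrixP /(_ (enum_rank None) 0); rewrite !mxE => /eqP.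
    by rewrite oner_eq0.
  have := mxrankS h1; rewrite mxrank_tr r1 mxrank_ker mxrank_tr => hle.
  have hEA : (kermx one <= A)%MS.
    apply/row_subP => i; apply: (even_sub None hp); apply: sum_row0.
    by rewrite -row_mul mulmx_ker row0.
  have := mxrankS hEA; rewrite mxrank_ker r1 => hge.
  have e : #|{: option F}| = (2 ^ m).+1 by rewrite card_option hF.
  move: (\rank A) hle hge hrA => r; rewrite e => ? ? ?.
  lia.
Qed.
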